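(* Let $G$ be a compact Hausdorff topological group and $X$ a $G$-connected Hausdorff $G$-space, and let $x,y\in X$ with $G_x\subseteq G_y$. Then there exists a $G$-homotopy $F\colon\mathcal{O}(x)\times I\to X$ such that $F_0$ is the inclusion $\mathcal{O}(x)\hookrightarrow X$ and $F_1(\mathcal{O}(x))\subseteq\mathcal{O}(y)$.
   Context: $G_x=\{g: gx=x\}$ is the isotropy group and $\mathcal{O}(x)=Gx$ the orbit of $x$. $X$ is $G$-connected if $X^H=\{x: hx=x\ \forall h\in H\}$ is path-connected for every closed subgroup $H$. A $G$-homotopy is a $G$-equivariant map $\mathcal{O}(x)\times I\to X$, with $G$ acting trivially on $I$ and diagonally on the product. *)

(* Defs.v *)
From HB Require Import structures.
From mathcomp Require Import all_boot all_order all_algebra.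
From mathcomp Require Import all_classical all_reals all_analysis.
Set Implicit Arguments. Unset Strict Implicit. Unset Printing Implicit Defensive.
Import Order.TTheory GRing.Theory Num.Theory.
Local Open Scope classical_set_scope.
Local Open Scope ring_scope.

Record topgroup_axioms (G : topologicalType) (mul : G -> G -> G)
    (inv : G -> G) (e : G) : Prop := TopGroupAxioms {
  tg_mulA : forall a b c, mul a (mul b c) = mul (mul a b) c;
  tg_mul1g : forall a, mul e a = a;
  tg_mulVg : forall a, mul (inv a) a = e;
  tg_mul_cont : continuous (fun p : G * G => mul p.1 p.2);
  tg_inv_cont : continuous inv }.

Record G_space (G X : topologicalType) (mul : G -> G -> G) (e : G)
    (act : G -> X -> X) : Prop := GSpace {
  gs_act1 : forall x, act e x = x;
  gs_actM : forall g h x, act (mul g h) x = act g (act h x);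
  gs_cont : continuous (fun p : G * X => act p.1 p.2) }.

Definition closed_subgroup (G : topologicalType) (mul : G -> G -> G)
    (inv : G -> G) (e : G) (H : set G) : Prop :=
  [/\ closed H, H e, (forall a b, H a -> H b -> H (mul a b))
    & (forall a, H a -> H (inv a))].

Definition path_connected (R : realType) (T : topologicalType) (A : set T)
  : Prop :=
  forall a b, A a -> A b -> exists f : R -> T,
    [/\ {within `[0, 1], continuous f}, f 0 = a, f 1 = b
      & f @` `[0, 1] `<=` A].

Definition fixed_set (G X : Type) (act : G -> X -> X) (H : set G) : set X :=
  [set x | forall h, H h -> act h x = x].

Definition G_connected (R : realType) (G X : topologicalType)
    (mul : G -> G -> G) (inv : G -> G) (e : G) (act : G -> X -> X) : Prop :=
  forall H : set G, closed_subgroup mul inv e H ->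
    path_connected R (fixed_set act H).

Definition isotropy (G X : Type) (act : G -> X -> X) (x : X) : set G :=
  [set g | act g x = x].
Definition Gorbit (G X : Type) (act : G -> X -> X) (x : X) : set X :=
  [set act g x | g in [set: G]].

(* Main.v *)
Require Import Defs.
From HB Require Import structures.
From mathcomp Require Import all_boot all_order all_algebra.
From mathcomp Require Import all_classical all_reals all_analysis.
Import Order.TTheory GRing.Theory Num.Theory.
Local Open Scope classical_set_scope.
Local Open Scope ring_scope.

Lemma mulgV_tg (G : topologicalType) (mul : G -> G -> G) (inv : G -> G) (e : G) :
  topgroup_axioms mul inv e -> forall g, mul g (inv g) = e.
Proof.
case=> mA m1 mV _ _ g.
transitivity (mul (mul (inv (inv g)) (inv g)) (mul g (inv g))).
  by rewrite mV m1.
by rewrite -mA (mA (inv g) g) mV m1 mV.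
Qed.

Lemma orbit_cont (G X : topologicalType) (mul : G -> G -> G) (e : G)
  (act : G -> X -> X) : G_space mul e act -> forall z, continuous (act^~ z).
Proof.
case=> _ _ cont z g.
have -> : act^~ z = (fun p : G * X => act p.1 p.2) \o (fun h => (h, z)) by [].
apply: continuous_comp; last exact: cont.
apply: cvg_pair => //; exact: cvg_cst.
Qed.
Lemma hausdorff_prodX (T U : topologicalType) :
  hausdorff_space T -> hausdorff_space U -> hausdorff_space (T * U)%type.
Proof.
move=> hT hU [p1 p2] [q1 q2] cl; congr pair.
  apply: hT => A B nA nB.
  have [] := cl (A `*` setT) (B `*` setT).
  - by exists (A, setT) => //; split => //; apply: filterT.
  - by exists (B, setT) => //; split => //; apply: filterT.
  by move=> [a b] [[/= ? _] [/= ? _]]; exists a.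
apply: hU => A B nA nB.
have [] := cl (setT `*` A) (setT `*` B).
- by exists (setT, A) => //; split => //; apply: filterT.
- by exists (setT, B) => //; split => //; apply: filterT.
by move=> [a b] [[/= _ ?] [/= _ ?]]; exists b.
Qed.

Lemma within_closedP (T U : topologicalType) (A : set T) (f : T -> U) :
  (forall C, closed C -> closed (f @^-1` C : set (subspace A))) ->
  {within A, continuous f}.
Proof. by move=> H; apply/continuous_closedP. Qed.

Lemma within_closedP' (R : realType) (G X : topologicalType) (act : G -> X -> X)
  (x : X) (F : X * R -> X) :
  (forall C, closed C -> closed (F @^-1` C : set (subspace (Gorbit act x `*` `[0, 1])))) ->
  {within Gorbit act x `*` `[0, 1], continuous F}.
Proof. by move=> H; apply/continuous_closedP. Qed.

Theorem lemma3p14 (R : realType) (G X : topologicalType)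
  (mul : G -> G -> G) (inv : G -> G) (e : G) (act : G -> X -> X) :
  topgroup_axioms mul inv e ->
  compact [set: G] -> hausdorff_space G ->
  G_space mul e act -> hausdorff_space X ->
  G_connected R mul inv e act ->
  forall x y : X, isotropy act x `<=` isotropy act y ->
  exists F : X * R -> X,
    [/\ {within Gorbit act x `*` `[0, 1], continuous F},
        (forall (g : G) (z : X) (t : R), Gorbit act x z -> 0 <= t <= 1 ->
            F (act g z, t) = act g (F (z, t))),
        (forall z, Gorbit act x z -> F (z, 0) = z)
      & (forall z, Gorbit act x z -> Gorbit act y (F (z, 1)))].
Proof.
move=> TG cG hG GS hX Gc x y sxy.
have mV := @mulgV_tg G mul inv e TG.
case: (TG) => mA m1 Vm _ _.
case: (GS) => a1 aM acont.
set H := isotropy act x.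
have Hsub : closed_subgroup mul inv e H.
  split.
  - have -> : H = (act^~ x) @^-1` [set x] by [].
    apply: (proj1 (continuous_closedP _) (@orbit_cont G X mul e act GS x)).
    exact/accessible_closed_set1/hausdorff_accessible.
  - exact: a1.
  - by move=> a b Ha Hb; rewrite /H /isotropy /= aM Hb Ha.
  - by move=> a Ha; rewrite /H /isotropy /= -{1}Ha -aM Vm a1.
have [f [fcont f0 f1 fI]] := Gc H Hsub x y (fun h Hh => Hh) (fun h Hh => sxy h Hh).
have key : forall g g0 t, act g x = act g0 x -> 0 <= t <= 1 ->
    act g (f t) = act g0 (f t).
  move=> g g0 t eq t01.
  have Hk : H (mul (inv g) g0) by rewrite /H /isotropy /= aM -eq -aM Vm a1.
  have fixk : act (mul (inv g) g0) (f t) = f t.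
    by apply: (fI (f t)); [exists t => //; rewrite in_itv /= | ].
  by rewrite -{1}fixk -aM mA mV m1.
pose rep z := xget e [set g | act g x = z].
have repP : forall z, Gorbit act x z -> act (rep z) x = z.
  by move=> z [g _ <-]; exact: (@xgetPex G e [set h | act h x = act g x] (ex_intro _ g erefl)).
exists (fun p => act (rep p.1) (f p.2)); split => /=.
- pose K : set (G * R) := [set: G] `*` `[0, 1].
  pose Phi := fun p : G * R => act p.1 (f p.2).
  pose pi := fun p : G * R => (act p.1 x, p.2).
  have Phicont : {within [set: G] `*` `[0, 1], continuous Phi}.
    apply/subspace_continuousP => q Kq.
    have -> : Phi = (fun p : G * X => act p.1 p.2) \o (fun p => (p.1, f p.2)) by [].
    apply: continuous_cvg; first exact: acont.
    apply: cvg_pair.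
    - by apply: cvg_within_filter; exact: cvg_fst.
    - apply: (cvg_comp snd f (G := within `[0, 1] (nbhs q.2))).
      + move=> B NB; exists (setT, fun t => `[0, 1]%classic t -> B t).
          * by split => //; exact: filterT.
          * by move=> [g t] /= [_ Nt] [_ It]; apply: Nt.
      + by move/subspace_continuousP: fcont; apply; case: Kq.
  have picont : {within [set: G] `*` `[0, 1], continuous (pi : G * R^o -> X * R^o)}.
    apply/subspace_continuousP => q Kq.
    rewrite /pi /from_subspace /=. apply: (@cvg_pair _ _ _ _ (nbhs (act q.1 x)) (nbhs (q.2 : R^o))); first last.
      by apply: cvg_within_filter; exact: cvg_snd.
    apply: (cvg_comp fst (act^~ x)).
      by apply: cvg_within_filter; exact: cvg_fst.
    exact: (@orbit_cont G X mul e act GS x).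
  apply: within_closedP' => C Ccl.
  have := proj1 (continuous_closedP _) Phicont C Ccl.
  move=> /closed_subspaceP [W Wcl WE].
  apply/closed_subspaceP.
  exists (pi @` (W `&` ([set: G] `*` `[0, 1]))).
  - apply: compact_closed; first exact: hausdorff_prodX hX (@Rhausdorff R).
    apply: continuous_compact; first exact: continuous_subspaceW picont.
    rewrite setIC; apply: compact_closedI => //.
    exact: compact_setX cG (@segment_compact R 0 1).
  - apply/seteqP; split => -[z t] /=.
    + move=> [[[g s] [Wgs Kgs] [<- <-]] Az]; split => //.
      have : (Phi @^-1` C `&` ([set: G] `*` `[0, 1])) (g, s) by rewrite -WE.
      case=> /= PC [_ Is]; rewrite /Phi /= in PC.
      have s01 : 0 <= s <= 1 by move: Is; rewrite in_itv.
      by rewrite (key _ g) // repP //; exists g.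
    + move=> [FC [zO It]]; split => //.
      have [g _ gz] := zO.
      exists (g, t) => /=; last by rewrite /pi gz.
      have : (Phi @^-1` C `&` ([set: G] `*` `[0, 1])) (g, t).
        split => //; rewrite /Phi /=.
        have t01 : 0 <= t <= 1 by move: It; rewrite in_itv.
        by rewrite -(key (rep z)) ?repP ?gz //; exists g.
      by rewrite -WE.
- move=> g z t zO t01; rewrite -aM; apply: key => //.
  by rewrite aM !repP //; case: zO => h _ <-; exists (mul g h) => //; rewrite aM.
- by move=> z zO; rewrite f0 repP.
- by move=> z zO; rewrite f1; exists (rep z).
Qed.
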